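(* For an integer $n\ge1$ and real $1\le x\le n$, define $\widetilde R_A(n,x)$ by $$A(n,x)=\vartheta(x)\,n+\widetilde R_A(n,x),$$ where $A(n,x)=\sum_{p\le x}\frac{2}{p-1}S_p(n)\log p$ (sum over primes). Then for $n^{2/3}\le x\le n$, $$\widetilde R_A(n,x)=O\!\left(x^{5/4}n^{3/4}(\log n)^{7/2}+n^{5/3}(\log n)^2\right).$$
   Context: $\vartheta(x)=\sum_{p\le x}\log p$ is the first Chebyshev function. For a base $b\ge2$, $d_b(m)$ is the sum of the base-$b$ digits of $m\ge0$ and $S_b(n)=\sum_{j=0}^{n-1}d_b(j)$. *)

(* Defs.v *)
From Stdlib Require Import Reals Lra Lia.
From mathcomp Require Import ssreflect ssrbool ssrnat prime.

Open Scope R_scope.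

(* base-b digit sum of m (fuel m suffices since b >= 2 makes m / b < m) *)
Fixpoint digsum_fuel (fuel b m : nat) : nat :=
  match fuel with
  | O => O
  | S f => match m with
           | O => O
           | _ => (Nat.modulo m b + digsum_fuel f b (Nat.div m b))%nat
           end
  end.

Definition digsum (b m : nat) : nat := digsum_fuel m b m.

Fixpoint Sdig (b n : nat) : nat :=
  match n with
  | O => O
  | S k => (Sdig b k + digsum b k)%nat
  end.

Fixpoint prime_sum_upto (N : nat) (x : R) (f : nat -> R) : R :=
  match N with
  | O => 0
  | S k => prime_sum_upto k x f +
           (if prime (S k) then (if Rle_dec (INR (S k)) x then f (S k) else 0) else 0)
  end.

(* bound Z.to_nat (up x) exceeds every integer <= x *)
Definition prime_sum (x : R) (f : nat -> R) : R :=
  prime_sum_upto (Z.to_nat (up x)) x f.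

Definition theta (x : R) : R := prime_sum x (fun p => ln (INR p)).

Definition A_sum (n : nat) (x : R) : R :=
  prime_sum x (fun p => 2 / (INR p - 1) * INR (Sdig p n) * ln (INR p)).

Definition RA (n : nat) (x : R) : R := A_sum n x - theta x * INR n.

(* Main.v *)
Require Import Defs.
From Stdlib Require Import Reals.
From Stdlib Require Import Arith Lra Lia Psatz.
From mathcomp Require prime ssrnat ssrbool.
Open Scope R_scope.

Lemma addnE' a b : ssrnat.addn a b = (a + b)%nat.
Proof. reflexivity. Qed.

Lemma fuel_indep b : (2 <= b)%nat -> forall f1 f2 m, (m <= f1)%nat -> (m <= f2)%nat ->
  digsum_fuel f1 b m = digsum_fuel f2 b m.
Proof.
  intros Hb f1; induction f1 as [|f1 IH]; intros f2 m H1 H2.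
  - assert (m = 0%nat) by lia; subst. destruct f2; reflexivity.
  - destruct m as [|m']. { destruct f2; reflexivity. }
    destruct f2 as [|f2]. { lia. }
    cbn [digsum_fuel]. change ssrnat.addn with Nat.add. f_equal; try reflexivity. apply IH.
    + assert (S m' / b < S m')%nat by (apply Nat.div_lt; lia). lia.
    + assert (S m' / b < S m')%nat by (apply Nat.div_lt; lia). lia.
Qed.

Lemma digsum0 p : digsum p 0 = 0%nat.
Proof. reflexivity. Qed.

Lemma digsum_eq p j : (2 <= p)%nat -> digsum p j = (j mod p + digsum p (j / p))%nat.
Proof.
  intros Hp. destruct j as [|j].
  - rewrite Nat.mod_0_l, Nat.div_0_l by lia. reflexivity.
  - unfold digsum at 1. cbn [digsum_fuel]. change ssrnat.addn with Nat.add. f_equal; try reflexivity. unfold digsum. apply fuel_indep; try lia.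
    assert (S j / p < S j)%nat by (apply Nat.div_lt; lia). lia.
Qed.

Lemma digsum_le_self p : (2 <= p)%nat -> forall m, (digsum p m <= m)%nat.
Proof.
  intros Hp m; induction m as [m IH] using lt_wf_ind.
  destruct m as [|m]. { rewrite digsum0; lia. }
  rewrite digsum_eq by lia.
  assert (H : (S m / p < S m)%nat) by (apply Nat.div_lt; lia).
  specialize (IH _ H).
  pose proof (Nat.div_mod (S m) p ltac:(lia)). nia.
Qed.

Lemma digsum_le p j : (2 <= p)%nat -> (digsum p j <= j mod p + j / p)%nat.
Proof. intros Hp. rewrite digsum_eq by lia. pose proof (digsum_le_self p Hp (j/p)). lia. Qed.

Lemma digsum_ge p j : (2 <= p)%nat -> (j mod p <= digsum p j)%nat.
Proof. intros Hp. rewrite digsum_eq by lia. lia. Qed.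

Lemma digsum_digits p : (2 <= p)%nat -> forall d j, (j < p ^ d)%nat -> (digsum p j <= (p - 1) * d)%nat.
Proof.
  intros Hp d; induction d as [|d IH]; intros j Hj.
  - simpl in Hj. assert (j = 0%nat) by lia. subst. rewrite digsum0. lia.
  - rewrite digsum_eq by lia.
    assert (j mod p < p)%nat by (apply Nat.mod_upper_bound; lia).
    assert (j / p < p ^ d)%nat.
    { apply Nat.div_lt_upper_bound; [lia|]. rewrite Nat.pow_succ_r' in Hj. lia. }
    specialize (IH _ H0). rewrite Nat.mul_succ_r. lia.
Qed.

Fixpoint Msum (p n : nat) : nat := match n with O => O | S k => (Msum p k + k mod p)%nat end.
Fixpoint Qsum (p n : nat) : nat := match n with O => O | S k => (Qsum p k + k / p)%nat end.

Lemma Sdig_ge p n : (2 <= p)%nat -> (Msum p n <= Sdig p n)%nat.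
Proof. intros Hp; induction n; simpl; change ssrnat.addn with Nat.add in *; [lia|]. pose proof (digsum_ge p n Hp). lia. Qed.

Lemma Sdig_le p n : (2 <= p)%nat -> (Sdig p n <= Msum p n + Qsum p n)%nat.
Proof. intros Hp; induction n; simpl; change ssrnat.addn with Nat.add in *; [lia|]. pose proof (digsum_le p n Hp). lia. Qed.

Lemma Sdig_le2 p n d : (2 <= p)%nat -> (n <= p ^ d)%nat -> (Sdig p n + n * d <= n * p * d)%nat.
Proof.
  intros Hp; induction n; intros Hn; simpl; change ssrnat.addn with Nat.add in *; [lia|].
  pose proof (digsum_digits p Hp d n ltac:(lia)). specialize (IHn ltac:(lia)).
  assert (E : ((p - 1) * d + d = p * d)%nat) by (destruct p; [lia|]; simpl; rewrite Nat.sub_0_r; ring).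
  nia.
Qed.

Lemma Msum_id p n : (2 <= p)%nat -> (2 * Msum p n + (n mod p) * (p - n mod p) = n * (p - 1))%nat.
Proof.
  intros Hp; induction n as [|n IH].
  - simpl. rewrite Nat.mod_0_l by lia. lia.
  - cbn [Msum].
    pose proof (Nat.div_mod n p ltac:(lia)) as Hd.
    pose proof (Nat.mod_upper_bound n p ltac:(lia)) as Hr.
    set (r := (n mod p)%nat) in *. set (q := (n / p)%nat) in *. clearbody r q.
    destruct (Nat.eq_dec (S r) p) as [E|E].
    + assert (Hm : 0%nat = S n mod p).
      { apply (Nat.mod_unique _ _ (S q)); [lia|]. rewrite Nat.mul_succ_r. lia. }
      rewrite <- Hm. subst p. nia.
    + assert (Hm : S r = S n mod p).
      { apply (Nat.mod_unique _ _ q); lia. }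
      rewrite <- Hm. destruct (Nat.le_exists_sub (S r) p ltac:(lia)) as [k [Hk _]].
      subst p. replace (k + S r - S r)%nat with k in * by lia.
      replace (k + S r - r)%nat with (S k) in * by lia.
      replace (k + S r - 1)%nat with (k + r)%nat in * by lia. nia.
Qed.

Lemma Qsum_bound p n : (2 <= p)%nat -> (2 * p * Qsum p n + n <= n * n)%nat.
Proof.
  intros Hp; induction n; simpl; [lia|].
  pose proof (Nat.Div0.mul_div_le n p). nia.
Qed.

Lemma exists_d p n : (2 <= p)%nat -> exists d, (n <= p ^ d)%nat /\ (d = 0%nat \/ (p ^ (d - 1) < n)%nat).
Proof.
  intros Hp. assert (H0 : (n <= p ^ n)%nat) by (pose proof (Nat.pow_gt_lin_r p n ltac:(lia)); lia).
  revert H0. generalize n at 2 as d. intros d; induction d as [|d IH]; intros H.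
  - exists 0%nat; split; auto.
  - destruct (Nat.le_gt_cases n (p ^ d)) as [H1|H1].
    + apply IH; auto.
    + exists (S d). split; auto. right. simpl. rewrite Nat.sub_0_r. auto.
Qed.

Lemma Sdig_lower p n : (2 <= p)%nat -> (n * p + p <= 2 * Sdig p n + p * p + n)%nat.
Proof.
  intros Hp. pose proof (Msum_id p n Hp). pose proof (Sdig_ge p n Hp).
  pose proof (Nat.mod_upper_bound n p ltac:(lia)).
  set (r := (n mod p)%nat) in *. clearbody r.
  destruct (Nat.le_exists_sub r p ltac:(lia)) as [k [Hk _]]. subst p.
  replace (k + r - r)%nat with k in * by lia. nia.
Qed.

Lemma Sdig_upper p n : (2 <= p)%nat -> (2 * Sdig p n * p + n * p <= n * p * p + n * n)%nat.
Proof.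
  intros Hp. pose proof (Msum_id p n Hp). pose proof (Sdig_le p n Hp). pose proof (Qsum_bound p n Hp).
  pose proof (Nat.mod_upper_bound n p ltac:(lia)).
  set (r := (n mod p)%nat) in *. clearbody r.
  destruct (Nat.le_exists_sub 1 p ltac:(lia)) as [k [Hk _]]. subst p.
  replace (k + 1 - 1)%nat with k in * by lia. nia.
Qed.

Lemma ln_le' x y : 0 < x -> x <= y -> ln x <= ln y.
Proof. intros Hx [H|H]; [left; apply ln_increasing; auto | subst; lra]. Qed.

Lemma term_bounds n p : (2 <= p)%nat -> (p <= n)%nat ->
  Rabs (2 / (INR p - 1) * INR (Sdig p n) * ln (INR p) - ln (INR p) * INR n)
    <= 5 * INR n * ln (INR n) /\
  Rabs (2 / (INR p - 1) * INR (Sdig p n) * ln (INR p) - ln (INR p) * INR n)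
    <= (INR p + 2 * INR n ^ 2 / INR p ^ 2) * ln (INR p).
Proof.
  intros Hp Hpn.
  pose proof (Sdig_lower p n Hp) as Hlo. pose proof (Sdig_upper p n Hp) as Hup.
  destruct (exists_d p n Hp) as [d [Hd1 Hd2]].
  pose proof (Sdig_le2 p n d Hp Hd1) as Hsm.
  apply le_INR in Hlo, Hup, Hsm. repeat rewrite ?plus_INR, ?mult_INR in Hlo. repeat rewrite ?plus_INR, ?mult_INR in Hup. repeat rewrite ?plus_INR, ?mult_INR in Hsm.
  assert (HP : 2 <= INR p) by (replace 2 with (INR 2) by (simpl; ring); apply le_INR; auto).
  assert (HPN : INR p <= INR n) by (apply le_INR; auto).
  assert (I2 : INR 2 = 2) by (simpl; ring). rewrite I2 in Hlo, Hup.
  set (P := INR p) in *. set (N := INR n) in *. set (s := INR (Sdig p n)) in *.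
  set (D := INR d) in *.
  assert (Hs : 0 <= s) by apply pos_INR.
  assert (HD : 0 <= D) by apply pos_INR.
  assert (HlnP : 0 < ln P) by (rewrite <- ln_1; apply ln_increasing; lra).
  assert (HlnPN : ln P <= ln N) by (apply ln_le'; lra).
  set (u := 2 / (P - 1) * s).
  assert (Hu : u * (P - 1) = 2 * s).
  { unfold u. assert (G : forall a b, b - 1 <> 0 -> 2 / (b - 1) * a * (b - 1) = 2 * a)
      by (intros; field; auto). apply G; lra. }
  replace (u * ln P - ln P * N) with ((u - N) * ln P) by ring.
  rewrite Rabs_mult, (Rabs_right (ln P)) by lra.
  assert (HDl : D * ln P <= ln N + ln P).
  { destruct Hd2 as [E|E].
    - subst d. unfold D; simpl. lra.
    - destruct (Nat.eq_dec d 0) as [Ed|Ed]. { subst d. unfold D; simpl. lra. }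
      apply lt_INR in E. rewrite pow_INR in E. fold P N in E.
      assert (Hd0 : (1 <= d)%nat) by lia.
      assert (Hl : ln (P ^ (d - 1)) < ln N).
      { apply ln_increasing; auto. apply pow_lt; lra. }
      rewrite ln_pow in Hl by lra. rewrite minus_INR in Hl by auto. simpl in Hl.
      fold D in Hl. lra. }
  split.
  - assert (Hu0 : 0 <= u) by (unfold u; apply Rmult_le_pos; [apply Rle_mult_inv_pos|]; lra).
    assert (HuD : u <= 2 * N * D).
    { assert (u * (P - 1) <= 2 * N * D * (P - 1)) by nra.
      apply Rmult_le_reg_r with (P - 1); lra. }
    assert (HlnN : 0 <= ln N) by lra.
    assert (u * ln P <= 4 * N * ln N).
    { assert (u * ln P <= 2 * N * D * ln P) by (apply Rmult_le_compat_r; lra).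
      nra. }
    assert (N * ln P <= N * ln N) by nra.
    apply Rle_trans with ((u + N) * ln P).
    { apply Rmult_le_compat_r; [lra|]. apply Rabs_le; split; lra. }
    nra.
  - apply Rmult_le_compat_r; [lra|].
    assert (Hl : - P <= u - N).
    { assert ((u - N + P) * (P - 1) >= 0) by nra.
      destruct (Rle_or_lt 0 (u - N + P)); [lra|]. nra. }
    assert (Hr : u - N <= 2 * N ^ 2 / P ^ 2).
    { assert (Ht : (u - N) * (P - 1) * P <= N ^ 2) by nra.
      assert ((u - N) * P ^ 2 <= 2 * N ^ 2).
      { destruct (Rle_or_lt (u - N) 0). { nra. } nra. }
      apply Rmult_le_reg_r with (P ^ 2). { nra. }
      field_simplify; [lra | nra]. }
    assert (0 <= 2 * N ^ 2 / P ^ 2) by (apply Rle_mult_inv_pos; nra).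
    apply Rabs_le; lra.
Qed.

Lemma psu_lin N x f g c : prime_sum_upto N x f - prime_sum_upto N x g * c =
  prime_sum_upto N x (fun p => f p - g p * c).
Proof.
  induction N as [|N IH]; cbn [prime_sum_upto]; [ring|].
  rewrite <- IH. destruct (prime.prime (S N)); destruct (Rle_dec (INR (S N)) x); cbn [ssrbool.is_left]; ring.
Qed.

Lemma psu_bound N x y a b h : 0 <= x -> 0 <= y -> 0 <= a -> 0 <= b ->
  (forall k, prime.prime k = true -> INR k <= x ->
     Rabs (h k) <= a + (if Rle_dec (INR k) y then b else 0)) ->
  Rabs (prime_sum_upto N x h) <= Rmin (INR N) x * a + Rmin (INR N) y * b.
Proof.
  intros Hx Hy Ha Hb Hh. induction N as [|N IH]; cbn [prime_sum_upto].
  - rewrite Rabs_R0. simpl INR. rewrite !Rmin_left by lra. lra.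
  - eapply Rle_trans; [apply Rabs_triang|]. rewrite S_INR.
    assert (M1 : forall z, Rmin (INR N) z <= Rmin (INR N + 1) z).
    { intros z. unfold Rmin. destruct (Rle_dec (INR N) z); destruct (Rle_dec (INR N + 1) z); lra. }
    assert (M2 : forall z, INR N + 1 <= z -> Rmin (INR N + 1) z = Rmin (INR N) z + 1).
    { intros z Hz. unfold Rmin. destruct (Rle_dec (INR N) z); destruct (Rle_dec (INR N + 1) z); lra. }
    destruct (prime.prime (S N)) eqn:Ep.
    + destruct (Rle_dec (INR N + 1) x) as [Hl|Hl]; cbn [ssrbool.is_left].
      * specialize (Hh _ Ep ltac:(rewrite S_INR; exact Hl)). rewrite S_INR in Hh.
        rewrite (M2 x Hl).
        destruct (Rle_dec (INR N + 1) y) as [Hl2|Hl2]; cbv beta iota in Hh.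
        -- rewrite (M2 y Hl2). nra.
        -- pose proof (M1 y). nra.
      * rewrite Rabs_R0. pose proof (M1 x). pose proof (M1 y). nra.
    + rewrite Rabs_R0. pose proof (M1 x). pose proof (M1 y). nra.
Qed.

Lemma Rpower_pos' a b : 0 < Rpower a b.
Proof. unfold Rpower. apply exp_pos. Qed.

Lemma div_le' a b c : 0 < c -> a <= b * c -> a / c <= b.
Proof. intros Hc H. unfold Rdiv. apply Rmult_le_reg_r with c; auto.
  rewrite Rmult_assoc, Rinv_l by lra. lra. Qed.

Theorem theoremA2 :
  exists C : R, 0 < C /\
    forall (n : nat) (x : R),
      (1 <= n)%nat ->
      Rpower (INR n) (2 / 3) <= x -> x <= INR n ->
      Rabs (RA n x) <=
        C * (Rpower x (5 / 4) * Rpower (INR n) (3 / 4)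
               * (ln (INR n) ^ 3 * sqrt (ln (INR n)))
             + Rpower (INR n) (5 / 3) * (ln (INR n)) ^ 2).
Proof.
  exists 16. split; [lra|]. intros n x Hn Hyx HxN.
  unfold RA, A_sum, theta, prime_sum. rewrite psu_lin.
  assert (HN1 : 1 <= INR n) by (replace 1 with (INR 1) by reflexivity; apply le_INR; auto).
  set (N := INR n) in *. set (y := Rpower N (2/3)) in *.
  assert (Hy0 : 0 < y) by apply Rpower_pos'.
  assert (HL0 : 0 <= ln N) by (rewrite <- ln_1; apply ln_le'; lra).
  set (L := ln N) in *.
  assert (Hy3 : y * y * y = N ^ 2).
  { unfold y. rewrite <- !Rpower_plus. rewrite <- Rpower_pow by lra.
    f_equal. simpl. field. }
  eapply Rle_trans.
  { apply (psu_bound _ x y (L * (x + 2 * y)) (5 * N * L)); try nra.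
    intros k Hk Hkx.
    assert (k2 : (2 <= k)%nat) by exact (ssrbool.elimT ssrnat.leP (prime.prime_gt1 Hk)).
    assert (kn : (k <= n)%nat) by (apply INR_le; fold N; lra).
    destruct (term_bounds n k k2 kn) as [B1 B2]. fold N L in B1, B2.
    destruct (Rle_dec (INR k) y) as [Hky|Hky].
    - nra.
    - assert (HP2 : 2 <= INR k) by (replace 2 with (INR 2) by (simpl; ring); apply le_INR; auto).
      assert (HlnP : 0 < ln (INR k)) by (rewrite <- ln_1; apply ln_increasing; lra).
      assert (HlnPN : ln (INR k) <= L) by (apply ln_le'; lra).
      assert (Hq : 2 * N ^ 2 / INR k ^ 2 <= 2 * y).
      { assert (Hk2 : 0 < INR k ^ 2) by (simpl; nra).
        assert (Hyy : y * y <= INR k ^ 2) by (simpl; nra).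
        apply div_le'; [exact Hk2|]. rewrite <- Hy3.
        assert (y * (y * y) <= y * INR k ^ 2) by (apply Rmult_le_compat_l; lra). nra. }
      assert (0 <= 2 * N ^ 2 / INR k ^ 2) by (apply Rle_mult_inv_pos; [nra|simpl; nra]).
      eapply Rle_trans; [exact B2|].
      assert ((INR k + 2 * N ^ 2 / INR k ^ 2) * ln (INR k) <= (x + 2 * y) * ln (INR k))
        by (apply Rmult_le_compat_r; lra).
      assert ((x + 2 * y) * ln (INR k) <= (x + 2 * y) * L) by (apply Rmult_le_compat_l; lra).
      lra. }
  assert (Hm1 : Rmin (INR (Z.to_nat (up x))) x <= x) by apply Rmin_r.
  assert (Hm2 : Rmin (INR (Z.to_nat (up x))) y <= y) by apply Rmin_r.
  assert (Hm0 : 0 <= Rmin (INR (Z.to_nat (up x))) x) by (unfold Rmin; destruct Rle_dec; [apply pos_INR|lra]).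
  assert (Hm0' : 0 <= Rmin (INR (Z.to_nat (up x))) y) by (unfold Rmin; destruct Rle_dec; [apply pos_INR|lra]).
  set (m1 := Rmin (INR (Z.to_nat (up x))) x) in *.
  set (m2 := Rmin (INR (Z.to_nat (up x))) y) in *.
  assert (Hb1 : m1 * (L * (x + 2 * y)) + m2 * (5 * N * L) <= x * (L * (x + 2 * y)) + y * (5 * N * L)).
  { apply Rplus_le_compat; apply Rmult_le_compat_r; nra. }
  eapply Rle_trans; [exact Hb1|].
  assert (HNy : N * y = Rpower N (5/3)).
  { unfold y. rewrite <- (Rpower_1 N) at 1 by lra. rewrite <- Rpower_plus. f_equal. field. }
  assert (Hx2 : x * x <= Rpower x (5/4) * Rpower N (3/4)).
  { assert (E : x * x = Rpower x (5/4) * Rpower x (3/4)).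
    { rewrite <- Rpower_plus. replace (5/4 + 3/4) with (INR 2) by (simpl; field).
      rewrite Rpower_pow by lra. simpl. ring. }
    rewrite E. apply Rmult_le_compat_l. { left; apply Rpower_pos'. }
    apply Rle_Rpower_l; lra. }
  rewrite <- HNy.
  set (A := Rpower x (5/4) * Rpower N (3/4)) in *.
  assert (Hsq : 0 <= sqrt L) by apply sqrt_pos.
  destruct (Nat.eq_dec n 1) as [E1|E1].
  - assert (L = 0) by (unfold L, N; rewrite E1; simpl; apply ln_1).
    rewrite H. assert (0 <= A) by nra. nra.
  - assert (HN2 : 2 <= N) by (unfold N; replace 2 with (INR 2) by (simpl; ring); apply le_INR; lia).
    assert (HL2 : / 2 < L) by (apply Rlt_le_trans with (ln 2); [apply ln_lt_2| apply ln_le'; lra]).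
    assert (Hs2 : / 2 <= sqrt L).
    { rewrite <- (sqrt_pow2 (/2)) by lra. apply sqrt_le_1_alt. simpl. lra. }
    assert (HL3 : L <= 8 * (L ^ 3 * sqrt L)).
    { assert (HLL : /4 <= L * L) by nra.
      assert (HH : /4 * /2 <= L * L * sqrt L) by (apply Rmult_le_compat; lra).
      replace (8 * (L ^ 3 * sqrt L)) with (L * (8 * (L * L * sqrt L))) by (simpl; ring).
      assert (1 <= 8 * (L * L * sqrt L)) by lra.
      assert (L * 1 <= L * (8 * (L * L * sqrt L))) by (apply Rmult_le_compat_l; lra). lra. }
    assert (HL4 : L <= 2 * L ^ 2) by (simpl; nra).
    assert (HxyN : x * y <= N * y) by nra.
    assert (0 <= A) by nra.
    assert (T1 : L * (x * x) <= A * (8 * (L ^ 3 * sqrt L))).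
    { apply Rle_trans with (A * L); [nra|]. apply Rmult_le_compat_l; lra. }
    assert (T2 : 7 * (N * y) * L <= 7 * (N * y) * (2 * L ^ 2)).
    { apply Rmult_le_compat_l; nra. }
    nra.
Qed.
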